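(* Let $K_2^p=\{x\in\mathbf{R}^p : \|(x_1,\dots,x_{p-1})\|_2\le x_p\}$ be the second-order cone and $\mathbf{R}_+^p$ the non-negative orthant. For every $x\in\mathbf{R}^p$, $$P_{K_2^p\cap\mathbf{R}_+^p}(x)=P_{K_2^p}\left(P_{\mathbf{R}_+^{p-1}\times\mathbf{R}}(x)\right).$$
   Context: For a closed convex set $C\subset\mathbf{R}^p$, $P_C(x)$ denotes the Euclidean projection of $x$ onto $C$, i.e. the unique point of $C$ closest to $x$ in $\|\cdot\|_2$. $\mathbf{R}_+^{p-1}\times\mathbf{R}$ is the set of $x\in\mathbf{R}^p$ with $x_1,\dots,x_{p-1}\ge 0$. *)

(* Defs.v *)
(* R : realType; vectors in R^p are row vectors 'rV[R]_p with p = n.+1 *)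
From HB Require Import structures.
From mathcomp Require Import all_boot all_order all_algebra.
From mathcomp Require Import reals.
From Stdlib Require Import ClassicalEpsilon.
Set Implicit Arguments. Unset Strict Implicit. Unset Printing Implicit Defensive.
Import Order.TTheory GRing.Theory Num.Theory.
Local Open Scope ring_scope.

Section Defs.
Variable R : realType.

Definition norm2 (p : nat) (x : 'rV[R]_p) : R := Num.sqrt (\sum_(i < p) x 0 i ^+ 2).

Definition is_proj (p : nat) (C : 'rV[R]_p -> Prop) (x y : 'rV[R]_p) : Prop :=
  C y /\ forall z, C z -> norm2 (x - y) <= norm2 (x - z).

(* P_C(x): the (unique, for closed convex nonempty C) point of C closest to x *)
Definition proj (p : nat) (C : 'rV[R]_p -> Prop) (x : 'rV[R]_p) : 'rV[R]_p :=
  epsilon (inhabits 0) (is_proj C x).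

Definition head_idx (n : nat) (i : 'I_n) : 'I_n.+1 := widen_ord (leqnSn n) i.

Definition soc (n : nat) (x : 'rV[R]_n.+1) : Prop :=
  Num.sqrt (\sum_(i < n) x 0 (head_idx i) ^+ 2) <= x 0 ord_max.

Definition orthant (p : nat) (x : 'rV[R]_p) : Prop := forall i, 0 <= x 0 i.

Definition orthant_head (n : nat) (x : 'rV[R]_n.+1) : Prop :=
  forall i : 'I_n, 0 <= x 0 (head_idx i).

Definition setI_pred (p : nat) (A B : 'rV[R]_p -> Prop) (x : 'rV[R]_p) : Prop :=
  A x /\ B x.

End Defs.

(* Main.v *)
Require Import Defs.
From mathcomp Require Import all_boot all_order all_algebra.
From mathcomp Require Import reals ring lra zify.
From Stdlib Require Import ClassicalEpsilon.
Set Implicit Arguments. Unset Strict Implicit. Unset Printing Implicit Defensive.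
Import Order.TTheory GRing.Theory Num.Theory.
Local Open Scope ring_scope.

Section Aux.
Variable R : realType.

Definition dotv p (a b : 'rV[R]_p) : R := \sum_i a 0 i * b 0 i.

Lemma norm2E p (a : 'rV[R]_p) : norm2 a = Num.sqrt (dotv a a).
Proof. by rewrite /norm2 /dotv; under eq_bigr do rewrite expr2. Qed.

Lemma dotv_ge0 p (a : 'rV[R]_p) : 0 <= dotv a a.
Proof. by apply: sumr_ge0 => i _; rewrite -expr2 sqr_ge0. Qed.

Lemma proj_VI p (C : 'rV[R]_p -> Prop) v y : C y ->
  (forall z, C z -> dotv (v - y) (z - y) <= 0) -> proj C v = y.
Proof.
move=> Cy VI.
have key : forall z, C z -> dotv (v - y) (v - y) + dotv (y - z) (y - z) <= dotv (v - z) (v - z).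
  move=> z Cz; have := VI z Cz.
  have -> : dotv (v - z) (v - z) = dotv (v - y) (v - y) + dotv (y - z) (y - z)
      - 2 * dotv (v - y) (z - y).
    rewrite /dotv mulr_sumr -big_split -sumrB /=; apply: eq_bigr => i _.
    rewrite !mxE; ring.
  lra.
have Py : is_proj C v y.
  split=> // z Cz; rewrite !norm2E ler_sqrt ?dotv_ge0 //.
  by have := key z Cz; have := dotv_ge0 (y - z); lra.
have := epsilon_spec (inhabits 0) (is_proj C v) (ex_intro _ y Py).
rewrite -/(proj C v); set z := proj C v; case=> Cz Hz.
have h1 := Hz y Cy; have h2 := key z Cz.
rewrite !norm2E ler_sqrt ?dotv_ge0 // in h1.
have h3 : dotv (y - z) (y - z) = 0 by have := dotv_ge0 (y - z); lra.
apply/rowP => i; apply/eqP; rewrite -subr_eq0.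
have h4 : (y - z) 0 i * (y - z) 0 i = 0.
  by apply: (psumr_eq0P _ h3) => // j _; rewrite -expr2 sqr_ge0.
move/eqP: h4; rewrite mulf_eq0 orbb !mxE subr_eq0 eq_sym.
by rewrite eq_sym subr_eq0 eq_sym.
Qed.

Lemma cs2 m (a b : 'I_m -> R) :
  (\sum_i a i * b i) ^+ 2 <= (\sum_i a i ^+ 2) * (\sum_i b i ^+ 2).
Proof.
have H : 0 <= \sum_i \sum_j (a i * b j - a j * b i) ^+ 2.
  by apply: sumr_ge0 => i _; apply: sumr_ge0 => j _; exact: sqr_ge0.
have AB : (\sum_i a i ^+ 2) * (\sum_i b i ^+ 2) = \sum_i \sum_j a i ^+ 2 * b j ^+ 2.
  by rewrite mulr_suml; apply: eq_bigr => i _; rewrite mulr_sumr.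
have AB' : (\sum_i a i ^+ 2) * (\sum_i b i ^+ 2) = \sum_i \sum_j a j ^+ 2 * b i ^+ 2.
  by rewrite mulrC mulr_suml; apply: eq_bigr => i _; rewrite mulr_sumr; apply: eq_bigr => j _; rewrite mulrC.
have S2 : (\sum_i a i * b i) ^+ 2 = \sum_i \sum_j (a i * b i) * (a j * b j).
  by rewrite expr2 mulr_suml; apply: eq_bigr => i _; rewrite mulr_sumr.
have E : \sum_i \sum_j (a i * b j - a j * b i) ^+ 2 =
   (\sum_i a i ^+ 2) * (\sum_i b i ^+ 2) + (\sum_i a i ^+ 2) * (\sum_i b i ^+ 2)
    - 2 * (\sum_i a i * b i) ^+ 2.
  rewrite {1}AB AB' S2 -big_split mulr_sumr -sumrB /=.
  apply: eq_bigr => i _; rewrite -big_split mulr_sumr -sumrB /=.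
  by apply: eq_bigr => j _; ring.
lra.
Qed.

Lemma cs m (a b : 'I_m -> R) :
  \sum_i a i * b i <= Num.sqrt (\sum_i a i ^+ 2) * Num.sqrt (\sum_i b i ^+ 2).
Proof.
have ha : 0 <= \sum_i a i ^+ 2 by apply: sumr_ge0 => i _; exact: sqr_ge0.
rewrite -sqrtrM // (le_trans (ler_norm _)) // -sqrtr_sqr ler_sqrt ?cs2 //.
by apply: mulr_ge0 => //; apply: sumr_ge0 => i _; exact: sqr_ge0.
Qed.

Variable n : nat.

Lemma dot_split (a b : 'rV[R]_n.+1) : dotv a b =
  \sum_(i < n) a 0 (head_idx i) * b 0 (head_idx i) + a 0 ord_max * b 0 ord_max.
Proof. by rewrite /dotv big_ord_recr. Qed.

Lemma hd_neq (i : 'I_n) : (head_idx i == ord_max) = false.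
Proof. by apply/negbTE; rewrite -(inj_eq val_inj) /= neq_ltn ltn_ord. Qed.

Definition mk (a s : R) (v : 'rV[R]_n.+1) : 'rV[R]_n.+1 :=
  \row_j (if j == ord_max then s else a * v 0 j).

Lemma subE p (a b : 'rV[R]_p) j : (a - b) 0 j = a 0 j - b 0 j.
Proof. by rewrite !mxE. Qed.

Lemma mk_hd a s v i : mk a s v 0 (head_idx i) = a * v 0 (head_idx i).
Proof. by rewrite /mk mxE hd_neq. Qed.

Lemma mk_last a s v : mk a s v 0 ord_max = s.
Proof. by rewrite /mk mxE eqxx. Qed.


Definition NN (v : 'rV[R]_n.+1) := Num.sqrt (\sum_(i < n) v 0 (head_idx i) ^+ 2).
Definition al (v : 'rV[R]_n.+1) : R :=
  if NN v <= v 0 ord_max then 1 else if NN v <= - v 0 ord_max then 0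
  else ((NN v + v 0 ord_max) / 2) / NN v.
Definition sv (v : 'rV[R]_n.+1) : R :=
  if NN v <= v 0 ord_max then v 0 ord_max else if NN v <= - v 0 ord_max then 0
  else (NN v + v 0 ord_max) / 2.
Definition PK (v : 'rV[R]_n.+1) := mk (al v) (sv v) v.

Lemma soc_VI v : 0 <= al v /\ soc (PK v) /\
  forall z, soc z -> dotv (v - PK v) (z - PK v) <= 0.
Proof.
set N := NN v; set t := v 0 ord_max.
set Sw := \sum_(i < n) v 0 (head_idx i) ^+ 2.
have Sw0 : 0 <= Sw by apply: sumr_ge0 => i _; exact: sqr_ge0.
have N0 : 0 <= N by exact: sqrtr_ge0.
have NSw : N ^+ 2 = Sw by rewrite sqr_sqrtr.
have socy : forall a s, 0 <= a -> a * N <= s -> soc (mk a s v).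
  move=> a s a0 h; rewrite /soc mk_last.
  have -> : \sum_(i < n) mk a s v 0 (head_idx i) ^+ 2 = a ^+ 2 * Sw.
    by rewrite /Sw mulr_sumr; apply: eq_bigr => i _; rewrite mk_hd exprMn.
  by rewrite sqrtrM ?sqr_ge0 // sqrtr_sqr ger0_norm.
have VIe : forall a s z, dotv (v - mk a s v) (z - mk a s v) =
    (1 - a) * (\sum_(i < n) v 0 (head_idx i) * z 0 (head_idx i)) - (1 - a) * a * Sw
    + (t - s) * (z 0 ord_max - s).
  move=> a s z; rewrite dot_split !subE !mk_last; congr (_ + _).
  rewrite /Sw !mulr_sumr -sumrB; apply: eq_bigr => i _; rewrite !subE !mk_hd; ring.
have zfacts : forall z, soc z -> 
    \sum_(i < n) v 0 (head_idx i) * z 0 (head_idx i) <= N * Num.sqrt (\sum_(i < n) z 0 (head_idx i) ^+ 2)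
    /\ Num.sqrt (\sum_(i < n) z 0 (head_idx i) ^+ 2) <= z 0 ord_max
    /\ 0 <= Num.sqrt (\sum_(i < n) z 0 (head_idx i) ^+ 2).
  move=> z sz; split; first exact: (cs (fun i => v 0 (head_idx i)) (fun i => z 0 (head_idx i))).
  by split; [exact: sz | exact: sqrtr_ge0].
rewrite /PK /al /sv -/N -/t.
case: ifP => h1.
  split=> //; split; first by apply: socy => //; lra.
  by move=> z _; rewrite VIe; lra.
move: h1 => /negbT; rewrite -ltNge => h1.
case: ifP => h2.
  split=> //; split; first by apply: socy => //; lra.
  move=> z sz; rewrite VIe.
  have [h3 [h4 h5]] := zfacts z sz.
  set M := Num.sqrt _ in h3 h4 h5.
  have q1 : 0 <= N * (z 0 ord_max - M) by apply: mulr_ge0; lra.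
  have q2 : 0 <= (- (N + t)) * z 0 ord_max by apply: mulr_ge0; lra.
  nra.
move: h2 => /negbT; rewrite -ltNge => h2.
have Np : 0 < N by lra.
set c := (N + t) / 2.
have hc : c / N * N = c by rewrite mulrVK // unitfE gt_eqF.
have a0 : 0 <= c / N by apply: divr_ge0; rewrite /c; lra.
have a1 : c / N <= 1 by rewrite ler_pdivrMr // /c; lra.
split=> //; split; first by apply: socy => //; lra.
move=> z sz; rewrite VIe.
have [h3 [h4 h5]] := zfacts z sz.
set M := Num.sqrt _ in h3 h4 h5.
have q1 : (1 - c / N) * (\sum_(i < n) v 0 (head_idx i) * z 0 (head_idx i)) <= (1 - c/N) * (N * M).
  by apply: ler_wpM2l => //; lra.
have e1 : (1 - c / N) * (N * M) = N * M - c * M.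
  by rewrite mulrBl mul1r mulrA hc.
have e2 : (1 - c / N) * (c / N) * Sw = (N - c) * c.
  by rewrite -NSw; field; exact: lt0r_neq0.
have q2 : 0 <= (N - t) * (z 0 ord_max - M) by apply: mulr_ge0; lra.
rewrite /c in e1 e2 q1 *; nra.
Qed.


Definition PH (x : 'rV[R]_n.+1) : 'rV[R]_n.+1 :=
  \row_j (if j == ord_max then x 0 j else Num.max (x 0 j) 0).

Lemma PH_hd x i : PH x 0 (head_idx i) = Num.max (x 0 (head_idx i)) 0.
Proof. by rewrite /PH mxE hd_neq. Qed.

Lemma PH_last x : PH x 0 ord_max = x 0 ord_max.
Proof. by rewrite /PH mxE eqxx. Qed.

Lemma ord_split (j : 'I_n.+1) : j = ord_max \/ exists i, j = head_idx i.
Proof.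
case: j => m hm.
have [lt|eq] : (m < n)%N \/ m = n by lia.
  by right; exists (Ordinal lt); apply: val_inj.
by left; apply: val_inj.
Qed.

End Aux.

Theorem lemma6 (R : realType) (n : nat) (x : 'rV[R]_n.+1) :
  proj (setI_pred (@soc R n) (@orthant R n.+1)) x =
  proj (@soc R n) (proj (@orthant_head R n) x).
Proof.
have e1 : proj (@orthant_head R n) x = PH x.
  apply: proj_VI.
    by move=> i; rewrite PH_hd le_max lexx orbT.
  move=> z zH; rewrite dot_split !subE PH_last subrr mul0r addr0.
  apply: sumr_le0 => i _; rewrite !subE !PH_hd; have := zH i.
  have [h|h] := leP (x 0 (head_idx i)) 0.
    by move=> ?; nra.
  by rewrite subrr mul0r.
rewrite e1; set P := PH x.
have [a0 [sK VI]] := soc_VI P.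
have -> : proj (@soc R n) P = PK P by apply: proj_VI.
apply: proj_VI.
  split=> // j; have [->|[i ->]] := ord_split j.
    move: sK; rewrite /soc /PK mk_last => sK.
    exact: le_trans (sqrtr_ge0 _) sK.
  by rewrite /PK mk_hd /P PH_hd; apply: mulr_ge0 => //; rewrite le_max lexx orbT.
move=> z [zK zO].
have -> : dotv (x - PK P) (z - PK P) = dotv (x - P) (z - PK P) + dotv (P - PK P) (z - PK P).
  by rewrite /dotv -big_split; apply: eq_bigr => j _; rewrite !subE /=; ring.
have hv := VI z zK.
suff hs : dotv (x - P) (z - PK P) <= 0 by lra.
rewrite dot_split !subE /P PH_last subrr mul0r addr0.
apply: sumr_le0 => i _; rewrite !subE /PK mk_hd !PH_hd; have := zO (head_idx i).
have [h|h] := leP (x 0 (head_idx i)) 0.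
  by rewrite mulr0 subr0 => ?; nra.
by rewrite subrr mul0r.
Qed.
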